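(* Let $\mathcal X$ be a real normed space and $\mathcal Y$ a normed space. Let $f:\mathcal X\to\mathcal Y$ be a mapping such that $\|f(x+y)-f(x-y)\|\le\varepsilon$ for some $\varepsilon>0$ and for all $x,y\in\mathcal X$ with $x\perp y$. Then there is an orthogonally constant mapping $c:\mathcal X\to\mathcal Y$ such that $\|f(x)-c(x)\|\le\varepsilon$ for all $x\in\mathcal X$.
   Context: For $x,y$ in a real normed space $\mathcal X$, isosceles orthogonality is defined by $x\perp y$ if and only if $\|x+y\|=\|x-y\|$. A mapping $c:\mathcal X\to\mathcal Y$ is called orthogonally constant if $c(x+y)=c(x-y)$ for all $x,y\in\mathcal X$ with $x\perp y$. *)

(* Defs.v *)
From HB Require Import structures.
From mathcomp Require Import all_boot all_order all_algebra.
From mathcomp Require Import all_classical all_reals all_analysis.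
Set Implicit Arguments. Unset Strict Implicit. Unset Printing Implicit Defensive.
Import Order.TTheory GRing.Theory Num.Theory.
Local Open Scope ring_scope.

Definition iso_orth (R : realType) (X : normedModType R) (x y : X) : Prop :=
  `|x + y| = `|x - y|.

Definition orth_const (R : realType) (X : normedModType R) (T : Type)
  (c : X -> T) : Prop :=
  forall x y : X, iso_orth x y -> c (x + y) = c (x - y).

(* Main.v *)
Require Import Defs.
From HB Require Import structures.
From mathcomp Require Import all_boot all_order all_algebra.
From mathcomp Require Import all_classical all_reals all_analysis.
Import Order.TTheory GRing.Theory Num.Theory.
Local Open Scope ring_scope.

Theorem proposition2p4 (R : realType) (X Y : normedModType R) (f : X -> Y)
  (eps : R) (heps : 0 < eps)
  (hf : forall x y : X, iso_orth x y -> `|f (x + y) - f (x - y)| <= eps) :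
  exists c : X -> Y, orth_const c /\ (forall x : X, `|f x - c x| <= eps).
Proof.
have key : forall u v : X, `|u| = `|v| -> `|f u - f v| <= eps.
  move=> u v huv.
  pose a := (2^-1 : R) *: (u + v); pose b := (2^-1 : R) *: (u - v).
  have hab1 : a + b = u.
    rewrite /a /b -scalerDr addrACA subrr addr0 -mulr2n -scalerMnr scalerMnl -mulr_natr.
    by rewrite mulVf ?scale1r // pnatr_eq0.
  have hab2 : a - b = v.
    rewrite /a /b -scalerBr opprB addrC addrA subrK -mulr2n -scalerMnr scalerMnl -mulr_natr.
    by rewrite mulVf ?scale1r // pnatr_eq0.
  have := hf a b; rewrite hab1 hab2; apply.
  by rewrite /iso_orth hab1 hab2.
exists (fun x => f (xget 0 [set y : X | `|y| = `|x|])); split.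
  by move=> x y h /=; rewrite h.
move=> x /=.
case: xgetP => [z -> hz|H]; last by exfalso; apply: (H x).
by apply: key; rewrite hz.
Qed.
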